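(* Let $\lambda$ be a partition and let $H_s$ be the subgraph of $\mathrm{Skel}(\lambda)$ induced by the standard Young tableaux whose descent compositions have exactly $s$ parts. Then any cycle in $H_s$ has even length.
   Context: Words are over the ordered alphabet $\mathcal{A}_n=\{1<2<\dots<n\}$. The crystal graph $\Gamma(\mathsf{plac}_n)$ has vertex set $\mathcal{A}_n^*$ and an edge $u\to v$ labelled $i$ iff $v=\tilde f_i(u)$, where $\tilde f_i$ is the usual Kashiwara operator (replace each $i$ by $+$, each $i+1$ by $-$, delete other letters, cancel factors $-+$ repeatedly, and change the letter $i$ corresponding to the rightmost remaining $+$ into $i+1$). The quasi-crystal graph $\Gamma(\mathsf{hypo}_n)$ is the subgraph whose edges $u\to v$ labelled $i$ are those with $v=f_i(u)$, where the quasi-Kashiwara operator $f_i$ is undefined if $u$ contains a subsequence $(i+1)i$, and otherwise replaces the rightmost $i$ of $u$ by $i+1$ (undefined if there is no $i$). Each connected component of $\Gamma(\mathsf{plac}_n)$ is a union of connected components of $\Gamma(\mathsf{hypo}_n)$; a component of $\Gamma(\mathsf{plac}_n)$ consists of (words whose Schensted insertion tableaux are) the Young tableaux of a fixed shape $\lambda$, and its quasi-crystal components correspond to the minimal parsings of these tableaux; for each such minimal parsing there is a unique standard Young tableau with the same minimal parsing. The descent set of a standard Young tableau of size $N$ is the set of entries $i$ such that $i+1$ lies in a row of greater index; if it is $\{i_1<\dots<i_k\}$, the descent composition is $(i_1,i_2-i_1,\dots,N-i_k)$. The skeleton $\mathrm{Skel}(\lambda)$: let $n$ be at least the maximum length of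 a descent composition of a standard Young tableau of shape $\lambda$; take a connected component of $\Gamma(\mathsf{plac}_n)$ whose associated Young tableaux have shape $\lambda$; replace each quasi-crystal component it contains by its associated standard Young tableau, keeping, for each pair of adjacent quasi-crystal components, one oriented edge with minimal label among all edges joining them. The result is independent of $n$ and of the choice of component, and depends only on $\lambda$. *)

(* Defs.v *)
From Stdlib Require Import Relations.
From mathcomp Require Import all_boot.
Set Implicit Arguments. Unset Strict Implicit. Unset Printing Implicit Defensive.

Definition word := seq nat.

Definition word_over (n : nat) (w : word) : bool :=
  all (fun a => (0 < a) && (a <= n)) w.

(* Letters i become '+', letters i+1 become '-'; factors '-+' are cancelled
   repeatedly.  Scanning left to right, c counts the pending unmatched '-';
   a '+' is cancelled iff c > 0.  Returns the position of the rightmost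
   remaining '+' (if any). *)
Fixpoint unm_plus (i c pos : nat) (w : word) : option nat :=
  match w with
  | [::] => None
  | a :: w' =>
      if a == i then
        if 0 < c then unm_plus i c.-1 pos.+1 w'
        else match unm_plus i c pos.+1 w' with
             | Some p => Some p
             | None => Some pos
             end
      else if a == i.+1 then unm_plus i c.+1 pos.+1 w'
      else unm_plus i c pos.+1 w'
  end.

Definition kashiwara_f (i : nat) (w : word) : option word :=
  match unm_plus i 0 0 w with
  | Some p => Some (set_nth 0 w p i.+1)
  | None => None
  end.

(* undefined if w contains the subsequence (i+1) i or no letter i;
   otherwise the rightmost i becomes i+1 *)
Definition quasi_f (i : nat) (w : word) : option word :=
  if (i \in w) && ~~ subseq [:: i.+1; i] w
  then Some (set_nth 0 w (size w - (index i (rev w)).+1) i.+1)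
  else None.

Definition plac_edge (n : nat) (u v : word) : Prop :=
  word_over n u /\ exists i, 0 < i < n /\ kashiwara_f i u = Some v.

Definition hypo_edge (n : nat) (u v : word) : Prop :=
  word_over n u /\ exists i, 0 < i < n /\ quasi_f i u = Some v.

Definition plac_conn (n : nat) : relation word :=
  clos_refl_sym_trans word (plac_edge n).
Definition hypo_conn (n : nat) : relation word :=
  clos_refl_sym_trans word (hypo_edge n).

Definition tableau := seq (seq nat).   (* list of rows, top row first *)

Fixpoint bump_row (r : seq nat) (x : nat) : seq nat * option nat :=
  match r with
  | [::] => ([:: x], None)
  | y :: r' =>
      if x < y then (x :: r', Some y)
      else let: (r'', b) := bump_row r' x in (y :: r'', b)
  end.

Fixpoint ins_tab (t : tableau) (x : nat) : tableau :=
  match t with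
  | [::] => [:: [:: x]]
  | r :: t' =>
      let: (r', b) := bump_row r x in
      match b with
      | None => r' :: t'
      | Some y => r' :: ins_tab t' y
      end
  end.

Definition insertion (w : word) : tableau := foldl ins_tab [::] w.

Definition tab_shape (t : tableau) : seq nat := map size t.

Definition is_partition (l : seq nat) : bool :=
  sorted geq l && all (fun a => 0 < a) l.

Definition is_syt (t : tableau) : bool :=
  [&& is_partition (tab_shape t),
      all (sorted ltn) t,
      all (fun r => all (fun j => nth 0 (nth [::] t r) j < nth 0 (nth [::] t r.+1) j)
                        (iota 0 (size (nth [::] t r.+1))))
          (iota 0 (size t).-1)
    & perm_eq (flatten t) (iota 1 (size (flatten t)))].

Definition row_of (t : tableau) (k : nat) : nat := find (fun r => k \in r) t.

Definition descents (t : tableau) : seq nat :=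
  [seq i <- iota 1 (size (flatten t)).-1 | row_of t i < row_of t i.+1].

Definition desc_comp (t : tableau) : seq nat :=
  pairmap (fun a b => b - a) 0 (rcons (descents t) (size (flatten t))).

Definition std (w : word) : word :=
  [seq (count (fun q => (nth 0 w q < nth 0 w p) ||
                        ((nth 0 w q == nth 0 w p) && (q < p)))
              (iota 0 (size w))).+1 | p <- iota 0 (size w)].

(* the standard Young tableau associated with the quasi-crystal component of u
   (std commutes with insertion: this is std(P(u)), the unique SYT with the
   same minimal parsing as P(u)) *)
Definition syt_of (u : word) : tableau := insertion (std u).

(* Skeleton built from the component of Gamma(plac_n) containing w0:
   T and T' are adjacent iff they are associated with two distinct
   quasi-crystal components of that component joined by some crystal edge. *)
Definition skel_adj (n : nat) (w0 : word) (T T' : tableau) : Prop :=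
  exists u v, plac_conn n w0 u /\ plac_edge n u v /\ ~ hypo_conn n u v /\
    ((syt_of u = T /\ syt_of v = T') \/ (syt_of u = T' /\ syt_of v = T)).

(* Main.v *)
Require Import Defs.
From mathcomp Require Import all_boot zify.
Set Implicit Arguments. Unset Strict Implicit. Unset Printing Implicit Defensive.

Fixpoint dc (s : seq nat) : nat :=
  match s with x :: ((y :: _) as s') => (y < x) + dc s' | _ => 0 end.
Fixpoint dm (s : seq nat) : nat :=
  match s with x :: ((y :: _) as s') => (y < x) + dm s' + dc s' | _ => 0 end.

Definition dpos (s : seq nat) : seq nat :=
  [seq j <- iota 1 (size s).-1 | nth 0 s j < nth 0 s j.-1].



Lemma dpos_cons2 x y s :
  dpos (x :: y :: s) = (if y < x then [:: 1] else [::]) ++ map S (dpos (y :: s)).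
Proof.
rewrite /dpos /=.
have -> : iota 2 (size s) = map S (iota 1 (size s)).
  by rewrite -[2]/(1+1) iotaDl.
rewrite filter_map /=.
have E : [seq j <- iota 1 (size s) | preim S (fun j => nth 0 [:: x, y & s] j < nth 0 [:: x, y & s] j.-1) j]
   = [seq j <- iota 1 (size s) | nth 0 (y :: s) j < nth 0 (y :: s) j.-1].
  apply: eq_in_filter => j; rewrite mem_iota => /andP [j1 _].
  by case: j j1.
rewrite E; case: ifP => _ //=; by rewrite map_comp.
Qed.

Lemma dpos_dc s : size (dpos s) = dc s.
Proof.
elim: s => [|x [|y s] IH] //.
rewrite dpos_cons2 size_cat size_map IH /=; by case: (y < x).
Qed.

Lemma sumn_mapS s : sumn (map S s) = sumn s + size s.
Proof. elim: s => //= a s ->; lia. Qed.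

Lemma dpos_dm s : sumn (dpos s) = dm s.
Proof.
elim: s => [|x [|y s] IH] //.
rewrite dpos_cons2 sumn_cat sumn_mapS IH dpos_dc /=; case: (y < x) => /=; lia.
Qed.

Lemma dc_cons2 x y s : dc (x :: y :: s) = (y < x) + dc (y :: s).
Proof. by []. Qed.
Lemma dm_cons2 x y s : dm (x :: y :: s) = (y < x) + dm (y :: s) + dc (y :: s).
Proof. by []. Qed.

Definition bd (s t : seq nat) : bool :=
  [&& s != [::], t != [::] & head 0 t < last 0 s].

Lemma dc_cat s t : dc (s ++ t) = dc s + bd s t + dc t.
Proof.
elim: s => [|x s IH]; first by rewrite /bd /=.
case: s IH => [|y s] IH.
  by clear IH; case: t => [|z t] //=; rewrite /bd /=; lia.
rewrite cat_cons cat_cons dc_cons2 -cat_cons IH dc_cons2.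
rewrite /bd /=; lia.
Qed.

Lemma dm_cat s t : dm (s ++ t) = dm s + size s * bd s t + dm t + size s * dc t.
Proof.
elim: s => [|x s IH]; first by rewrite /= !mul0n addn0.
case: s IH => [|y s] IH.
  by clear IH; case: t => [|z t] //=; rewrite /bd /=; lia.
rewrite cat_cons cat_cons dm_cons2 -cat_cons IH dc_cat dm_cons2.
have -> : bd [:: x, y & s] t = bd (y :: s) t by [].
rewrite /=; nia.
Qed.

Lemma dcdm_sorted s : sorted ltn s -> dc s = 0 /\ dm s = 0.
Proof.
elim: s => [|x [|y s] IH] //; rewrite [sorted _ _]/= => /andP [xy H].
rewrite dc_cons2 dm_cons2; have [-> ->] := IH H; by rewrite ltnNge ltnW.
Qed.

Lemma bd_catr s t u : t != [::] -> bd s (t ++ u) = bd s t.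
Proof. by case: t. Qed.

Lemma frame L M M' R : M != [::] -> M' != [::] -> size M = size M' ->
  dc (L ++ M ++ R) = dc (L ++ M' ++ R) ->
  (bd L M + dc M + bd M R = bd L M' + dc M' + bd M' R ->
     dm M + size M * bd M R = (dm M' + size M * bd M' R).+1) ->
  dm (L ++ M ++ R) = (dm (L ++ M' ++ R)).+1.
Proof.
move=> nM nM' sM.
rewrite !dc_cat !dm_cat !dc_cat !bd_catr // => Hc Hl.
have E : bd L M + dc M + bd M R = bd L M' + dc M' + bd M' R by lia.
have := Hl E. rewrite -sM.
have F : size L * bd L M + size L * (dc M + bd M R + dc R) =
         size L * bd L M' + size L * (dc M' + bd M' R + dc R).
  rewrite -!mulnDr; congr (_ * _); lia.
move: F; move: (size L * bd L M) (size L * bd L M') (size L * (dc M + bd M R + dc R)) (size L * (dc M' + bd M' R + dc R)) (size M * bd M R) (size M * bd M' R) (size M * dc R).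
move=> *; lia.
Qed.

Lemma dc_cons1 p X : dc (p :: X) = bd [:: p] X + dc X.
Proof. by rewrite -cat1s dc_cat. Qed.
Lemma dm_cons1 p X : dm (p :: X) = bd [:: p] X + dm X + dc X.
Proof. rewrite -cat1s dm_cat /=; lia. Qed.
Lemma dc_rcons X p : dc (X ++ [:: p]) = dc X + bd X [:: p].
Proof. rewrite dc_cat /=; lia. Qed.
Lemma dm_rcons X p : dm (X ++ [:: p]) = dm X + size X * bd X [:: p].
Proof. rewrite dm_cat /=; lia. Qed.

Lemma last_ge a A : sorted ltn (a :: A) -> a <= last a A.
Proof.
elim: A a => //= b A IH a /andP [ab H]; exact: leq_trans (ltnW ab) (IH b H).
Qed.

Lemma ltF m n : n <= m -> (m < n) = false.
Proof. by rewrite ltnNge => ->. Qed.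

Ltac bcase := repeat match goal with
  |- context [nat_of_bool ?b] =>
     lazymatch b with true => fail | false => fail | _ => let E := fresh "E" in case E: b end end.

Lemma window L p A B R :
  sorted ltn A -> sorted ltn B -> all (fun a => p < a) A -> all (fun b => b < p) B ->
  (A != [::] -> [/\ R != [::], p < head 0 R & head 0 R < head 0 A]) ->
  (B != [::] -> [/\ L != [::], head 0 B < last 0 L & last 0 L < p]) ->
  A ++ B != [::] ->
  dc (L ++ (p :: A ++ B) ++ R) = dc (L ++ (A ++ B ++ [:: p]) ++ R) ->
  dm (L ++ (p :: A ++ B) ++ R) = (dm (L ++ (A ++ B ++ [:: p]) ++ R)).+1.
Proof.
move=> sA sB pA pB hA hB nAB Hc.
have [dcA dmA] := dcdm_sorted sA.
have [dcB dmB] := dcdm_sorted sB.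
apply: (frame _ _ _ Hc) => //.
    by clear; case: A => //; case: B.
  rewrite [size (_ :: _)]/= !size_cat /=; lia.
rewrite catA dc_cons1 dm_cons1 dc_rcons dm_rcons !dc_cat !dm_cat dcA dmA dcB dmB.
clear Hc; case: A sA pA hA nAB {dcA dmA} => [|a A'] sA pA hA nAB; case: B sB pB hB {dcB dmB} nAB => [|b B'] sB pB hB nAB //.
-
  have [nL hbL hLp] := hB isT.
  have lB : last b B' < p := allP pB _ (mem_last b B').
  rewrite /bd /= nL /= last_cat /=.
  move: hbL hLp lB => /= H1 H2 H3.
  rewrite (ltF (ltnW H2)) H1 (ltn_trans H1 H2) (ltF (ltnW H3)).
  case: (_ && _); case: (_ && _) => /=; lia.
- have [nR pR Ra] := hA isT.
  have lA : p < last a A' := allP pA _ (mem_last a A').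
  have aA := last_ge sA.
  rewrite /bd /= nR /= !cats0 last_cat /=.
  move: pR Ra lA aA => /= H1 H2 H3 H4.
  rewrite (ltF (ltnW (ltn_trans H1 H2))) (leq_trans H2 H4) H3 (ltF (ltnW H1)).
  lia.
- have [nL hbL hLp] := hB isT. have [nR pR Ra] := hA isT.
  have lA : p < last a A' := allP pA _ (mem_last a A').
  have lB : last b B' < p := allP pB _ (mem_last b B').
  rewrite /bd /= nR nL /= !last_cat /=.
  move: hbL hLp pR Ra lA lB => /= H1 H2 H3 H4 H5 H6.
  rewrite (ltF (ltnW H2)) (ltF (ltnW (ltn_trans H3 H4))) (ltn_trans (ltn_trans H1 H2) H5).
  rewrite (ltF (ltnW (ltn_trans H6 H3))) (ltF (ltnW (ltn_trans H2 (ltn_trans H3 H4)))).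
  rewrite (ltF (ltnW H6)) (ltF (ltnW H3)).
  lia.
Qed.

Lemma bump_spec r x :
  (bump_row r x = (rcons r x, None) /\ all (fun z => z <= x) r) \/
  exists r1 y r2, [/\ r = r1 ++ y :: r2, bump_row r x = (r1 ++ x :: r2, Some y),
                      x < y & all (fun z => z <= x) r1].
Proof.
elim: r => [|z r IH] /=; first by left.
case: ifP => xz.
  right; exists [::], z, r; split => //.
case: IH => [[-> Ha]|[r1 [y [r2 [-> -> xy Ha]]]]].
  by left; split => //; rewrite Ha andbT leqNgt xz.
right; exists (z :: r1), y, r2; split => //=.
by rewrite Ha andbT leqNgt xz.
Qed.

Lemma row_of_cons r t k : row_of (r :: t) k = if k \in r then 0 else (row_of t k).+1.
Proof. by rewrite /row_of /=; case: ifP. Qed.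

Lemma ins_cons r t x : ins_tab (r :: t) x =
  let: (r', b) := bump_row r x in
  match b with None => r' :: t | Some y => r' :: ins_tab t y end.
Proof. by []. Qed.

Lemma ins_perm t x : perm_eq (flatten (ins_tab t x)) (x :: flatten t).
Proof.
elim: t x => [|r t IH] x; first by [].
rewrite ins_cons.
case: (bump_spec r x) => [[-> _]|[r1 [y [r2 [-> -> _ _]]]]] /=.
  apply/permP => P; rewrite -cats1 /= !count_cat /=; lia.
apply/permP => P; have /permP C := IH y.
move: (C P); rewrite /= => E; rewrite !count_cat /= E ?count_cat /=; lia.
Qed.

Lemma ins_mem t x k : (k \in flatten (ins_tab t x)) = (k == x) || (k \in flatten t).
Proof. by rewrite (perm_mem (ins_perm t x)) in_cons. Qed.

Lemma sorted_rcons_le r x : sorted leq r -> all (fun z => z <= x) r -> sorted leq (rcons r x).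
Proof.
case: r => [|a r] // H Ha.
rewrite /= rcons_path.
move: H; rewrite [sorted _ _]/= => -> /=.
by have := allP Ha _ (mem_last a r).
Qed.

Lemma sorted_repl r1 y r2 x : sorted leq (r1 ++ y :: r2) -> x < y ->
  all (fun z => z <= x) r1 -> sorted leq (r1 ++ x :: r2).
Proof.
rewrite !sorted_cat_cons => /andP [H1 H2] xy Ha.
apply/andP; split.
  apply: sorted_rcons_le => //.
  case: r1 H1 {Ha} => [|a r1] //=; rewrite rcons_path => /andP [] //.
case: r2 H2 => [|c r2] //= /andP [yc ->]; rewrite andbT.
exact: leq_trans (ltnW xy) yc.
Qed.

Lemma ins_sorted t x : all (sorted leq) t -> all (sorted leq) (ins_tab t x).
Proof.
elim: t x => [|r t IH] x //; rewrite [all _ (_ :: _)]/= => /andP [sr st].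
rewrite ins_cons.
case: (bump_spec r x) => [[-> Ha]|[r1 [y [r2 [Er -> xy Ha]]]]] /=.
  by rewrite st andbT sorted_rcons_le.
rewrite IH // andbT; apply: sorted_repl xy Ha; by rewrite -Er.
Qed.

Lemma row_ins_self t x : row_of (ins_tab t x) x = 0.
Proof.
case: t => [|r t]; first by rewrite /row_of /= mem_seq1 eqxx.
rewrite ins_cons.
case: (bump_spec r x) => [[-> _]|[r1 [y [r2 [_ -> _ _]]]]];
  rewrite row_of_cons ?mem_rcons ?mem_head //.
by rewrite mem_cat in_cons eqxx orbT.
Qed.

Lemma row_stay t x z : z < x -> z \in flatten t -> row_of (ins_tab t x) z = row_of t z.
Proof.
elim: t x => [|r t IH] x // zx.
rewrite ins_cons [flatten _]/= mem_cat.
case: (bump_spec r x) => [[-> _]|[r1 [y [r2 [-> -> xy _]]]]].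
  rewrite !row_of_cons mem_rcons in_cons (ltn_eqF zx) /=.
  by [].
rewrite !row_of_cons !mem_cat !in_cons (ltn_eqF zx) (ltn_eqF (ltn_trans zx xy)) /=.
case: ifP => // _ /= zt; by rewrite IH // (ltn_trans zx xy).
Qed.

Lemma sorted_after r1 y r2 : sorted leq (r1 ++ y :: r2) -> all (fun z => y <= z) r2.
Proof.
rewrite sorted_cat_cons => /andP [_ H].
exact: (order_path_min leq_trans H).
Qed.

Lemma row_ins_lt t j : all (sorted leq) t -> uniq (flatten t) ->
  j.+1 \in flatten t -> j \notin flatten t ->
  row_of (ins_tab t j) j < row_of (ins_tab t j) j.+1.
Proof.
rewrite row_ins_self.
case: t => [|r t] //; rewrite [all _ _]/= [flatten _]/= => /andP [sr _] U.
rewrite ins_cons.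
case: (bump_spec r j) => [[-> Ha]|[r1 [y [r2 [Er -> xy Ha]]]]] _ _.
  rewrite row_of_cons mem_rcons in_cons (gtn_eqF (ltnSn j)) /=.
  have -> : (j.+1 \in r) = false.
    by apply/negP => /(allP Ha); rewrite ltnn.
  by [].
rewrite row_of_cons mem_cat in_cons (gtn_eqF (ltnSn j)) /=.
have -> : (j.+1 \in r1) = false by apply/negP => /(allP Ha); rewrite ltnn.
have -> : (j.+1 \in r2) = false; last by [].
apply/negP => b2.
have sr' : sorted leq (r1 ++ y :: r2) by rewrite -Er.
have yb : y <= j.+1 by have := allP (sorted_after sr') _ b2.
have yE : y = j.+1 by apply/eqP; rewrite eqn_leq yb xy.
move: U; rewrite cat_uniq Er cat_uniq /= yE b2 /=.
by case/and3P => /and3P [].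
Qed.

Lemma uniq_mid (r1 : seq nat) (y : nat) r2 : uniq (r1 ++ y :: r2) -> (y \in r1) = false /\ (y \in r2) = false.
Proof.
rewrite cat_uniq => /and3P [_ /hasPn H /andP [yr2 _]].
split; last by apply/negbTE.
by apply/negbTE; apply: H; rewrite mem_head.
Qed.

Lemma presv t j x : x < j -> all (sorted leq) t -> uniq (flatten t) ->
  x \notin flatten t -> j \in flatten t -> j.+1 \in flatten t ->
  (row_of (ins_tab t x) j < row_of (ins_tab t x) j.+1) = (row_of t j < row_of t j.+1).
Proof.
elim: t x => [|r t IH] x // xj; rewrite [all _ _]/= [flatten _]/= => /andP [sr st] U xn aj bj.
have ur : uniq r by move: U; rewrite cat_uniq => /and3P [].
have ut : uniq (flatten t) by move: U; rewrite cat_uniq => /and3P [].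
have dis : forall k, k \in flatten t -> (k \in r) = false.
  move=> k kt; apply/negbTE; move: U; rewrite cat_uniq => /and3P [_ /hasPn H _].
  exact: H.
have xb : x < j.+1 := ltn_trans xj (ltnSn j).
rewrite ins_cons.
case: (bump_spec r x) => [[-> Ha]|[r1 [y [r2 [Er -> xy Ha]]]]].
  by rewrite !row_of_cons !mem_rcons !in_cons (gtn_eqF xj) (gtn_eqF xb).
have nj1 : (j \in r1) = false.
  by apply/negP => /(allP Ha); rewrite leqNgt xj.
have nb1 : (j.+1 \in r1) = false.
  by apply/negP => /(allP Ha); rewrite leqNgt xb.
have sr' : sorted leq (r1 ++ y :: r2) by rewrite -Er.
have ur' : uniq (r1 ++ y :: r2) by rewrite -Er.
have yr : y \in r by rewrite Er mem_cat mem_head orbT.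
have yt : y \notin flatten t by apply/negP => /dis; rewrite yr.
have aft := allP (sorted_after sr').
rewrite !row_of_cons Er !mem_cat !in_cons nj1 nb1 (gtn_eqF xj) (gtn_eqF xb) /=.
case: (ltngtP y j) => [yj | jy | yE].
  rewrite (gtn_eqF (ltn_trans yj (ltnSn j))) /=.
  case jr: (j \in r2); case br: (j.+1 \in r2) => //=.
  have jt : j \in flatten t.
    by move: aj; rewrite mem_cat Er mem_cat in_cons nj1 jr (gtn_eqF yj).
  have bt : j.+1 \in flatten t.
    by move: bj; rewrite mem_cat Er mem_cat in_cons nb1 br (gtn_eqF (ltn_trans yj (ltnSn j))).
  by rewrite !ltnS (IH y).
- case: (ltngtP y j.+1) => [yb | by_ | yE].
  + by move: jy; rewrite ltnNge -ltnS yb.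
  + have jr : (j \in r2) = false.
      by apply/negP => /aft; rewrite leqNgt jy.
    have br : (j.+1 \in r2) = false.
      by apply/negP => /aft; rewrite leqNgt by_.
    rewrite jr br /=.
    have jt : j \in flatten t.
      by move: aj; rewrite mem_cat Er mem_cat in_cons nj1 jr (ltn_eqF jy).
    have bt : j.+1 \in flatten t.
      by move: bj; rewrite mem_cat Er mem_cat in_cons nb1 br (ltn_eqF by_).
    by rewrite !row_stay.
  + have jr : (j \in r2) = false.
      by apply/negP => /aft; rewrite leqNgt jy.
    have [_ br] := uniq_mid ur'.
    rewrite yE in br.
    by rewrite yE jr br /= row_ins_self.
- have [_ jr] := uniq_mid ur'.
  rewrite yE in jr.
  rewrite yE jr (gtn_eqF (ltnSn j)) /=.
  case br: (j.+1 \in r2) => //=.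
  have bt : j.+1 \in flatten t.
    by move: bj; rewrite mem_cat Er mem_cat in_cons nb1 br yE (gtn_eqF (ltnSn j)).
  have jt : j \notin flatten t by apply/negP => /dis; rewrite Er mem_cat in_cons yE eqxx orbT.
  by rewrite ltnS row_ins_lt.
Qed.

Lemma ins_inv w : perm_eq (flatten (insertion w)) w /\ all (sorted leq) (insertion w).
Proof.
elim/last_ind: w => [|w x [P S]]; first by [].
rewrite /insertion foldl_rcons -/(insertion w).
split; last exact: ins_sorted.
apply: perm_trans (ins_perm _ _) _.
by rewrite perm_sym perm_rcons perm_cons perm_sym.
Qed.

Lemma rsk_desc w j : uniq w -> j \in w -> j.+1 \in w ->
  (row_of (insertion w) j < row_of (insertion w) j.+1) = (index j.+1 w < index j w).
Proof.
elim/last_ind: w => [|w x IH] // U.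
have [P S] := ins_inv w.
rewrite /insertion foldl_rcons -/(insertion w).
move: U; rewrite rcons_uniq => /andP [xw uw].
have memF k : (k \in flatten (insertion w)) = (k \in w) := perm_mem P k.
have uF : uniq (flatten (insertion w)) by rewrite (perm_uniq P).
rewrite -!cats1 !index_cat !mem_cat !mem_seq1 /=.
case: (ltngtP x j) => [xj | jx | xE].
- rewrite (gtn_eqF (ltn_trans xj (ltnSn j))) !orbF => jw bw.
  rewrite jw bw -IH // presv // memF //.
- case: (ltngtP x j.+1) => [xb | bx | xE].
  + by move: jx; rewrite ltnNge -ltnS xb.
  + rewrite !orbF => jw bw.
    rewrite jw bw -IH // !row_stay // ?memF //; exact: ltn_trans (ltnSn j) bx.
  + rewrite xE orbF => jw _.
    have bw : j.+1 \notin w by rewrite -xE.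
    rewrite jw (negbTE bw) addn0 row_ins_self ltn0.
    by apply/esym/negbTE; rewrite -leqNgt ltnW // index_mem.
- rewrite xE (gtn_eqF (ltnSn j)) orbF => _ bw.
  have jw : j \notin w by rewrite -xE.
  rewrite bw (negbTE jw) addn0 index_mem bw.
  by apply: row_ins_lt => //; rewrite memF.
Qed.

Definition keylt (w : word) (q r : nat) : bool :=
  (nth 0 w q < nth 0 w r) || (nth 0 w q == nth 0 w r) && (q < r).

Lemma keylt_trans w : transitive (keylt w).
Proof.
move=> b a c; rewrite /keylt.
case/orP => [h1|/andP [/eqP e1 h1]]; case/orP => [h2|/andP [/eqP e2 h2]];
  apply/orP; [left; lia | left; lia | left; lia | right; apply/andP; split; [apply/eqP; lia | lia]].
Qed.

Lemma keylt_irr w q : keylt w q q = false.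
Proof. by rewrite /keylt ltnn eqxx ltnn. Qed.

Definition blk (w : word) c := [seq q <- iota 0 (size w) | nth 0 w q == c].
Definition pi (w : word) K := flatten [seq blk w c | c <- iota 0 K].

Lemma pi_S w K : pi w K.+1 = pi w K ++ blk w K.
Proof. by rewrite /pi -addn1 iotaD map_cat flatten_cat /= cats0. Qed.

Lemma filter_split (f : nat -> nat) K (s : seq nat) :
  perm_eq [seq q <- s | f q < K.+1] ([seq q <- s | f q < K] ++ [seq q <- s | f q == K]).
Proof.
elim: s => [|x s IH] //=.
case: (ltngtP (f x) K) => h.
- by rewrite ltnS (ltnW h) /= perm_cons.
- by rewrite ltnS leqNgt h.
- rewrite h ltnSn /=.
  apply/permP => P; rewrite /= count_cat /= (permP IH) count_cat; by rewrite addnCA.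
Qed.

Lemma pi_perm_gen w K : perm_eq (pi w K) [seq q <- iota 0 (size w) | nth 0 w q < K].
Proof.
elim: K => [|K IH].
  by rewrite /pi /= (eq_filter (a2 := pred0)) ?filter_pred0.
rewrite pi_S perm_sym; apply: perm_trans (filter_split _ _ _) _.
by rewrite perm_cat2r perm_sym.
Qed.

Lemma pi_perm w K : (forall q, q < size w -> nth 0 w q < K) ->
  perm_eq (pi w K) (iota 0 (size w)).
Proof.
move=> H; apply: perm_trans (pi_perm_gen w K) _.
rewrite (@eq_in_filter _ _ predT) ?filter_predT //.
by move=> q; rewrite mem_iota => /andP [_ /H].
Qed.

Lemma mem_pi w K q : q \in pi w K -> nth 0 w q < K.
Proof.
case/flatten_mapP => c; rewrite mem_iota /blk mem_filter => /andP [_ cK] /andP [/eqP -> _].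
exact: cK.
Qed.

Lemma blk_sorted w c : sorted (keylt w) (blk w c).
Proof.
apply: (@sub_in_sorted _ (fun q => nth 0 w q == c) ltn).
- move=> q r; rewrite !unfold_in => /eqP qc /eqP rc qr; rewrite /keylt qc rc eqxx; apply/orP; right; exact: qr.
- exact: filter_all.
- rewrite /blk; apply: sorted_filter; [exact: ltn_trans | exact: iota_ltn_sorted].
Qed.

Lemma pi_sorted w K : sorted (keylt w) (pi w K).
Proof.
elim: K => [|K IH] //.
rewrite pi_S.
case E: (pi w K) IH => [|a s] IH; first exact: blk_sorted.
rewrite /= cat_path; apply/andP; split; first exact: IH.
case F: (blk w K) => [|b t] //=.
apply/andP; split; last by have := blk_sorted w K; rewrite F.
have la : last a s \in pi w K by rewrite E mem_last.
have hb : b \in blk w K by rewrite F mem_head.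
move: hb; rewrite /blk mem_filter => /andP [/eqP bK _].
by rewrite /keylt bK (mem_pi la).
Qed.

Lemma sorted_rank (T : eqType) (lt : rel T) (s : seq T) k x0 :
  transitive lt -> irreflexive lt -> sorted lt s -> k < size s ->
  count (fun y => lt y (nth x0 s k)) s = k.
Proof.
move=> tr irr so ks.
rewrite -{2}(mkseq_nth x0 s) /mkseq count_map.
rewrite (@eq_in_count _ _ (fun j => j < k)); last first.
  move=> j; rewrite mem_iota add0n => /andP [_ js] /=.
  case: (ltngtP j k) => h.
  - by apply: (sorted_ltn_nth tr x0 so).
  - apply/negP => h2.
    have h3 := sorted_ltn_nth tr x0 so k j ks js h.
    by have := tr _ _ _ h3 h2; rewrite irr.
  - by rewrite h irr.
have -> : size s = k + (size s - k) by rewrite subnKC // ltnW.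
rewrite iotaD count_cat.
rewrite (@eq_in_count _ _ predT); last by move=> j; rewrite mem_iota => /andP [_ ->].
rewrite count_predT size_iota.
rewrite (@eq_in_count _ _ pred0); last by move=> j; rewrite mem_iota add0n => /andP [h _] /=; rewrite ltnNge h.
by rewrite count_pred0 addn0.
Qed.

Lemma std_pi w K : (forall q, q < size w -> nth 0 w q < K) ->
  forall k, k < size w -> nth 0 (std w) (nth 0 (pi w K) k) = k.+1.
Proof.
move=> H k kN.
have P := pi_perm H.
have sP : size (pi w K) = size w by rewrite (perm_size P) size_iota.
have qN : nth 0 (pi w K) k < size w.
  have : nth 0 (pi w K) k \in iota 0 (size w) by rewrite -(perm_mem P) mem_nth // sP.
  by rewrite mem_iota.
rewrite /std (nth_map 0) ?size_iota // nth_iota // add0n.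
congr S.
rewrite -(permP P).
by have := @sorted_rank _ (keylt w) (pi w K) k 0 (@keylt_trans w) (keylt_irr w) (pi_sorted w K); rewrite sP => ->.
Qed.

Lemma size_std w : size (std w) = size w.
Proof. by rewrite /std size_map size_iota. Qed.

Section StdFacts.
Variables (w : word) (K : nat).
Hypothesis H : forall q, q < size w -> nth 0 w q < K.

Lemma size_pi : size (pi w K) = size w.
Proof. by rewrite (perm_size (pi_perm H)) size_iota. Qed.

Lemma pi_lt k : k < size w -> nth 0 (pi w K) k < size w.
Proof.
move=> kN.
have : nth 0 (pi w K) k \in iota 0 (size w) by rewrite -(perm_mem (pi_perm H)) mem_nth // size_pi.
by rewrite mem_iota.
Qed.

Lemma std_mem k : k < size w -> k.+1 \in std w.
Proof.
move=> kN; rewrite -(std_pi H kN) mem_nth // size_std; exact: pi_lt.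
Qed.

Lemma std_uniq : uniq (std w).
Proof.
apply: (@leq_size_uniq _ (iota 1 (size w))); first exact: iota_uniq.
  move=> x; rewrite mem_iota => /andP [x1 xN].
  have -> : x = x.-1.+1 by rewrite prednK.
  apply: std_mem; lia.
by rewrite size_std size_iota.
Qed.

Lemma std_index k : k < size w -> index k.+1 (std w) = nth 0 (pi w K) k.
Proof.
move=> kN; rewrite -(std_pi H kN) index_uniq //; last exact: std_uniq.
rewrite size_std; exact: pi_lt.
Qed.

Lemma desc_syt : descents (syt_of w) = dpos (pi w K).
Proof.
rewrite /descents /syt_of /dpos.
have [P _] := ins_inv (std w).
rewrite (perm_size P) size_std size_pi.
apply: eq_in_filter => i; rewrite mem_iota => /andP [i1 iN].
have e : i = i.-1.+1 by rewrite prednK.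
rewrite rsk_desc; first last.
- rewrite {1}e; apply: std_mem; lia.
- rewrite {1}e; apply: std_mem; lia.
- exact: std_uniq.
rewrite std_index; last lia.
by rewrite {2}e std_index //; lia.
Qed.

End StdFacts.

Lemma unm_shift i c pos w :
  unm_plus i c pos w = omap (addn pos) (unm_plus i c 0 w).
Proof.
elim: w c pos => [|a w IH] c pos //=.
rewrite !(IH _ pos.+1) !(IH _ 1).
case: ifP => _; first case: ifP => _.
- by case: (unm_plus _ _ 0 w) => [p|] //=; rewrite addnA addn1.
- by case: (unm_plus _ _ 0 w) => [p|] //=; rewrite ?addn0 // addnA addn1.
- by case: ifP => _; case: (unm_plus _ _ 0 w) => [p|] //=; rewrite addnA addn1.
Qed.

Definition U i c w := unm_plus i c 0 w.

Lemma U_cons i c a w : U i c (a :: w) =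
  if a == i then
    (if 0 < c then omap S (U i c.-1 w)
     else match U i c w with Some p => Some p.+1 | None => Some 0 end)
  else if a == i.+1 then omap S (U i c.+1 w) else omap S (U i c w).
Proof.
rewrite /U /= !(unm_shift _ _ 1).
case: ifP => _; first case: ifP => _ //.
  by case: (unm_plus _ _ 0 w).
by case: ifP => _; case: (unm_plus _ _ 0 w).
Qed.

Lemma U_some i c w r : U i c w = Some r -> r < size w /\ nth 0 w r = i.
Proof.
elim: w c r => [|a w IH] c r //.
rewrite U_cons.
case: eqP => [ai|_]; first case: ifP => _.
- by case E: (U i c.-1 w) => [p|] //= [<-]; have [] := IH _ _ E.
- case E: (U i c w) => [p|] [<-] //=; first by have [] := IH _ _ E.
- case: ifP => _.
    by case E: (U i c.+1 w) => [p|] //= [<-]; have [] := IH _ _ E.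
  by case E: (U i c w) => [p|] //= [<-]; have [] := IH _ _ E.
Qed.

Lemma U_none i c w : U i c w = None ->
  forall q, q < size w -> nth 0 w q = i -> 0 < c \/ exists2 q', q' < q & nth 0 w q' = i.+1.
Proof.
elim: w c => [|a w IH] c //.
rewrite U_cons.
case: eqP => [ai|ani]; first case: ifP => c0.
- move=> _ q _ _; by left.
- by case: (U i c w).
- case: ifP => [/eqP ab|nab].
    move=> _ [|q] _ /=; first by move=> ai; case: ani.
    move=> _; right; exists 0 => //.
  case E: (U i c w) => //= _ [|q] qs /=; first by move=> ai; case: ani.
  move=> wq; case: (IH _ E q qs wq) => [->|[q' q'q wq']]; first by left.
  by right; exists q'.+1.
Qed.

Lemma U_after i c w r : U i c w = Some r ->
  forall q, r < q < size w -> nth 0 w q = i -> exists q', r < q' < q /\ nth 0 w q' = i.+1.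
Proof.
elim: w c r => [|a w IH] c r //.
rewrite U_cons.
have step : forall c' p, U i c' w = Some p -> r = p.+1 ->
    forall q, r < q < size (a :: w) -> nth 0 (a :: w) q = i ->
    exists q', r < q' < q /\ nth 0 (a :: w) q' = i.+1.
  move=> c' p E -> [|q] //= /andP [pq qs] wq.
  have [q' [/andP [h1 h2] h3]] := IH _ _ E q (introT andP (conj pq qs)) wq.
  by exists q'.+1; split => //; apply/andP.
case: eqP => [ai|ani]; first case: ifP => c0.
- by case E: (U i c.-1 w) => [p|] //= [Er]; exact: (step _ _ E (esym Er)).
- case E: (U i c w) => [p|] [Er]; first exact: (step _ _ E (esym Er)).
  subst r; move=> [|q] // /andP [_ qs] wq.
  case: (U_none E qs wq) => [|[q' q'q wq']]; first by rewrite c0.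
  by exists q'.+1.
- case: ifP => _.
    by case E: (U i c.+1 w) => [p|] //= [Er]; exact: (step _ _ E (esym Er)).
  by case E: (U i c w) => [p|] //= [Er]; exact: (step _ _ E (esym Er)).
Qed.

Lemma U_bc i c w r : U i c w = Some r -> 0 < c -> exists2 q, q < r & nth 0 w q = i.
Proof.
elim: w c r => [|a w IH] c r //.
rewrite U_cons.
case: eqP => [ai|ani]; first case: ifP => c0.
- by case E: (U i c.-1 w) => [p|] //= [<-] _; exists 0.
- by move=> _; case.
- case: ifP => _.
    case E: (U i c.+1 w) => [p|] //= [<-] _.
    by have [q qp wq] := IH _ _ E isT; exists q.+1.
  case E: (U i c w) => [p|] //= [<-] c0.
  by have [q qp wq] := IH _ _ E c0; exists q.+1.
Qed.

Lemma U_before i c w r : U i c w = Some r ->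
  forall q, q < r -> nth 0 w q = i.+1 -> exists q', q < q' < r /\ nth 0 w q' = i.
Proof.
elim: w c r => [|a w IH] c r //.
rewrite U_cons.
have step : forall c' p, U i c' w = Some p -> r = p.+1 ->
    forall q, 0 < q -> q < r -> nth 0 (a :: w) q = i.+1 ->
    exists q', q < q' < r /\ nth 0 (a :: w) q' = i.
  move=> c' p E -> [|q] //= _ qp wq.
  have [q' [/andP [h1 h2] h3]] := IH _ _ E q qp wq.
  by exists q'.+1; split => //; apply/andP.
case: eqP => [ai|ani]; first case: ifP => c0.
- case E: (U i c.-1 w) => [p|] //= [Er] [|q]; last exact: (step _ _ E (esym Er)).
  by move=> _ /= /eqP; rewrite ai (ltn_eqF (ltnSn i)).
- case E: (U i c w) => [p|] [Er] [|q]; try exact: (step _ _ E (esym Er)).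
  + by move=> _ /= /eqP; rewrite ai (ltn_eqF (ltnSn i)).
  + by move=> _ /= /eqP; rewrite ai (ltn_eqF (ltnSn i)).
  + by subst r.
- case: ifP => [/eqP ab|nab].
    case E: (U i c.+1 w) => [p|] //= [Er] [|q]; last exact: (step _ _ E (esym Er)).
    move=> _ _; have [q' q'p wq'] := U_bc E isT.
    by exists q'.+1; subst r.
  case E: (U i c w) => [p|] //= [Er] [|q]; last exact: (step _ _ E (esym Er)).
  by move=> _ /= wq; move: nab; rewrite wq eqxx.
Qed.

Lemma pi_split w K i : i.+2 <= K ->
  pi w K = flatten [seq blk w c | c <- iota 0 i] ++ blk w i ++ blk w i.+1 ++
           flatten [seq blk w c | c <- iota i.+2 (K - i.+2)].
Proof.
move=> iK; rewrite /pi.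
have -> : K = i + (K - i) by rewrite subnKC // ltnW // ltnW.
rewrite iotaD add0n.
have -> : K - i = (K - i.+2).+2 by lia.
have -> : i + (K - i.+2).+2 - i.+2 = K - i.+2 by lia.
by rewrite map_cat flatten_cat.
Qed.

Lemma iota_split p N : p < N -> iota 0 N = iota 0 p ++ p :: iota p.+1 (N - p.+1).
Proof.
move=> pN; have -> : N = p + (N - p) by rewrite subnKC // ltnW.
rewrite iotaD add0n.
have -> : N - p = (N - p.+1).+1 by lia.
have -> : p + (N - p.+1).+1 - p.+1 = N - p.+1 by lia.
by [].
Qed.

Lemma head_le (s : seq nat) x : sorted ltn s -> x \in s -> head 0 s <= x.
Proof.
case: s => [|a s] //= so; rewrite in_cons => /orP [/eqP -> //|xs].
exact: ltnW (allP (order_path_min ltn_trans so) _ xs).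
Qed.

Lemma last_ge_mem (s : seq nat) x : sorted ltn s -> x \in s -> x <= last 0 s.
Proof.
case: s => [|a s] //= so.
elim: s a so => [|b s IH] a /=; first by rewrite mem_seq1 => _ /eqP ->.
case/andP => ab so; rewrite in_cons => /orP [/eqP ->|xs].
  exact: leq_trans (ltnW ab) (last_ge so).
exact: IH so xs.
Qed.

Lemma last_cat_ne (s t : seq nat) : t != [::] -> last 0 (s ++ t) = last 0 t.
Proof. by case: t => // a t _; rewrite last_cat. Qed.

Lemma nth_le_sumn (u : seq nat) q : nth 0 u q <= sumn u.
Proof.
elim: u q => [|a u IH] [|q] //=; first exact: leq_addr.
exact: leq_trans (IH q) (leq_addl _ _).
Qed.

Lemma blk_split w c p : p < size w ->
  blk w c = [seq q <- iota 0 p | nth 0 w q == c] ++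
            (if nth 0 w p == c then [:: p] else [::]) ++
            [seq q <- iota p.+1 (size w - p.+1) | nth 0 w q == c].
Proof. by move=> pN; rewrite /blk (iota_split pN) filter_cat /=; case: ifP. Qed.

Lemma std_eq_pi u v K : size u = size v ->
  (forall q, q < size u -> nth 0 u q < K) -> (forall q, q < size v -> nth 0 v q < K) ->
  pi u K = pi v K -> std u = std v.
Proof.
move=> suv Hu Hv E.
apply: (@eq_from_nth _ 0); first by rewrite !size_std.
move=> q; rewrite size_std => qN.
have qin : q \in pi u K by rewrite (perm_mem (pi_perm Hu)) mem_iota.
set k := index q (pi u K).
have kN : k < size u by rewrite -(size_pi Hu) index_mem.
have nk : nth 0 (pi u K) k = q by rewrite nth_index.
rewrite -{1}nk (std_pi Hu kN) -nk E (std_pi Hv) //; by rewrite -suv.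
Qed.

Lemma head_mem (s : seq nat) : s != [::] -> head 0 s \in s.
Proof. by case: s => // a s _; rewrite mem_head. Qed.
Lemma last_mem (s : seq nat) : s != [::] -> last 0 s \in s.
Proof. by case: s => // a s _; rewrite /= mem_last. Qed.

Lemma edge_parity i u v : kashiwara_f i u = Some v -> syt_of u <> syt_of v ->
  size (descents (syt_of u)) = size (descents (syt_of v)) ->
  odd (sumn (descents (syt_of u))) = ~~ odd (sumn (descents (syt_of v))).
Proof.
rewrite /kashiwara_f; case E: (unm_plus i 0 0 u) => [p|] // [<-] {v}.
set v := set_nth 0 u p i.+1.
have EU : U i 0 u = Some p by [].
have [pN up] := U_some EU.
have sv : size v = size u by rewrite size_set_nth; apply/maxn_idPr.
have nv q : nth 0 v q = if q == p then i.+1 else nth 0 u q.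
  by rewrite nth_set_nth /=.
set K := (sumn u).+2.
have iK : i.+2 <= K by rewrite /K ltnS ltnS -up nth_le_sumn.
have Hu q : q < size u -> nth 0 u q < K.
  by move=> _; rewrite /K; apply: leq_trans (nth_le_sumn u q) _; rewrite ltnW.
have Hv q : q < size v -> nth 0 v q < K.
  rewrite nv sv; case: eqP => _ qN; [exact: iK | exact: Hu].
move=> ne.
rewrite (desc_syt Hu) (desc_syt Hv) !dpos_dc !dpos_dm => Hc.
set X := flatten [seq blk u c | c <- iota 0 i].
set Z := flatten [seq blk u c | c <- iota i.+2 (K - i.+2)].
set N := size u.
set I1 := [seq q <- iota 0 p | nth 0 u q == i].
set A := [seq q <- iota p.+1 (N - p.+1) | nth 0 u q == i].
set B := [seq q <- iota 0 p | nth 0 u q == i.+1].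
set C := [seq q <- iota p.+1 (N - p.+1) | nth 0 u q == i.+1].
have Pu : pi u K = (X ++ I1) ++ (p :: A ++ B) ++ (C ++ Z).
  rewrite (pi_split u iK) (blk_split i pN) (blk_split i.+1 pN) up eqxx (ltn_eqF (ltnSn i)).
  by rewrite -!catA /= -?catA.
have Pv : pi v K = (X ++ I1) ++ (A ++ B ++ [:: p]) ++ (C ++ Z).
  have pNv : p < size v by rewrite sv.
  rewrite (pi_split v iK) (blk_split i pNv) (blk_split i.+1 pNv) !nv eqxx.
  rewrite (gtn_eqF (ltnSn i)) eqxx sv.
  have eX : flatten [seq blk v c | c <- iota 0 i] = X.
    congr flatten; apply/eq_in_map => c; rewrite mem_iota => /andP [_ ci].
    rewrite /blk sv; apply: eq_in_filter => q _; rewrite nv.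
    case: (q =P p) => [->|] //; rewrite up (gtn_eqF ci) (gtn_eqF (ltn_trans ci (ltnSn i))) //.
  have eZ : flatten [seq blk v c | c <- iota i.+2 (K - i.+2)] = Z.
    congr flatten; apply/eq_in_map => c; rewrite mem_iota => /andP [ci _].
    rewrite /blk sv; apply: eq_in_filter => q _; rewrite nv.
    case: (q =P p) => [->|] //; rewrite up (ltn_eqF ci) (ltn_eqF (ltn_trans (ltnSn i) ci)) //.
  have f1 (c : nat) : [seq q <- iota 0 p | nth 0 v q == c] = [seq q <- iota 0 p | nth 0 u q == c].
    apply: eq_in_filter => q; rewrite mem_iota => /andP [_ qp]; by rewrite nv (ltn_eqF qp).
  have f2 (c : nat) : [seq q <- iota p.+1 (N - p.+1) | nth 0 v q == c] =
                      [seq q <- iota p.+1 (N - p.+1) | nth 0 u q == c].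
    apply: eq_in_filter => q; rewrite mem_iota => /andP [pq _]; by rewrite nv (gtn_eqF pq).
  rewrite eX eZ f1 f2 f1 f2 -/I1 -/A -/B -/C.
  by rewrite -!catA.
have memA q : (q \in A) = [&& p < q, q < N & nth 0 u q == i].
  rewrite /A mem_filter mem_iota; apply/idP/idP.
    case/andP => -> /andP [-> h]; rewrite andbT; lia.
  case/and3P => h1 h2 ->; apply/andP; lia.
have memC q : (q \in C) = [&& p < q, q < N & nth 0 u q == i.+1].
  rewrite /C mem_filter mem_iota; apply/idP/idP.
    case/andP => -> /andP [-> h]; rewrite andbT; lia.
  case/and3P => h1 h2 ->; apply/andP; lia.
have memI q : (q \in I1) = (q < p) && (nth 0 u q == i).
  by rewrite /I1 mem_filter mem_iota andbC.
have memB q : (q \in B) = (q < p) && (nth 0 u q == i.+1).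
  by rewrite /B mem_filter mem_iota andbC.
have sA : sorted ltn A.
  by apply: sorted_filter; [exact: ltn_trans | exact: iota_ltn_sorted].
have sB : sorted ltn B.
  by apply: sorted_filter; [exact: ltn_trans | exact: iota_ltn_sorted].
have sC : sorted ltn C.
  by apply: sorted_filter; [exact: ltn_trans | exact: iota_ltn_sorted].
have sI : sorted ltn I1.
  by apply: sorted_filter; [exact: ltn_trans | exact: iota_ltn_sorted].
have pA : all (fun a => p < a) A.
  by apply/allP => q; rewrite memA => /and3P [].
have pB : all (fun b => b < p) B.
  by apply/allP => q; rewrite memB => /andP [].
have hA : A != [::] -> [/\ C ++ Z != [::], p < head 0 (C ++ Z) & head 0 (C ++ Z) < head 0 A].
  move=> nA; have := head_mem nA; rewrite memA => /and3P [h1 h2 /eqP h3].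
  have [q' [/andP [q1 q2] q3]] := U_after EU (introT andP (conj h1 h2)) h3.
  have q'C : q' \in C by rewrite memC q1 q3 eqxx (ltn_trans q2 h2).
  have nC : C != [::] by case: (C) q'C.
  have := head_mem nC; rewrite memC => /and3P [c1 _ _].
  have c2 := head_le sC q'C.
  case: (C) nC c1 c2 => // c C' _ c1 c2 /=.
  split => //; exact: leq_ltn_trans c2 q2.
have hB : B != [::] -> [/\ X ++ I1 != [::], head 0 B < last 0 (X ++ I1) & last 0 (X ++ I1) < p].
  move=> nB; have := head_mem nB; rewrite memB => /andP [h1 /eqP h2].
  have [q' [/andP [q1 q2] q3]] := U_before EU h1 h2.
  have q'I : q' \in I1 by rewrite memI q2 q3 eqxx.
  have nI : I1 != [::] by case: (I1) q'I.
  rewrite last_cat_ne //.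
  have := last_mem nI; rewrite memI => /andP [l1 _].
  have l2 := last_ge_mem sI q'I.
  split => //; last exact: leq_trans q1 l2.
  by case: (X) nI; case: (I1).
have hAB : A ++ B != [::].
  apply/negP => /eqP AB; apply: ne.
  have A0 : A = [::] by apply: size0nil; move: (congr1 size AB); rewrite size_cat /=; lia.
  have B0 : B = [::] by apply: size0nil; move: (congr1 size AB); rewrite size_cat /=; lia.
  rewrite /syt_of (@std_eq_pi u v K (esym sv) Hu Hv) //.
  by rewrite Pu Pv A0 B0.
rewrite Pu Pv in Hc *.
by rewrite (window sA sB pA pB hA hB hAB Hc).
Qed.

Theorem proposition7p2 :
  forall (lam : seq nat), is_partition lam ->
  forall n : nat,
    (forall T : tableau, is_syt T -> tab_shape T = lam -> size (desc_comp T) <= n) ->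
  forall w0 : word, word_over n w0 -> tab_shape (insertion w0) = lam ->
  forall (s : nat) (c : seq tableau),
    3 <= size c -> uniq c ->
    (forall T, T \in c -> size (desc_comp T) = s) ->
    (forall i, i < size c ->
       skel_adj n w0 (nth [::] c i) (nth [::] c (i.+1 %% size c))) ->
    ~~ odd (size c).
Proof.
move=> lam _ n _ w0 _ _ s c c3 uc cs adj.
pose f T := odd (sumn (descents T)).
have size_dc T : size (desc_comp T) = (size (descents T)).+1.
  by rewrite /desc_comp size_pairmap size_rcons.
have c0 : 0 < size c by apply: leq_trans c3.
have step k : k < size c -> f (nth [::] c k) = ~~ f (nth [::] c (k.+1 %% size c)).
  move=> kc.
  have [u [v [_ [[_ [i [_ Ef]]] [nh Hs]]]]] := adj k kc.
  have k'c : k.+1 %% size c < size c by rewrite ltn_pmod.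
  have ne : nth [::] c k <> nth [::] c (k.+1 %% size c).
    move/eqP; rewrite nth_uniq //.
    case: (ltngtP k.+1 (size c)) => h.
    - by rewrite modn_small // (ltn_eqF (ltnSn k)).
    - exfalso; lia.
    - rewrite h modnn; move/eqP => k0; move: h c3; rewrite k0; lia.
  have sz : size (descents (nth [::] c k)) = size (descents (nth [::] c (k.+1 %% size c))).
    apply: succn_inj; rewrite -!size_dc !cs //; exact: mem_nth.
  case: Hs => [[Eu Ev] | [Eu Ev]].
  - rewrite -Eu -Ev in ne sz *; exact: edge_parity Ef ne sz.
  - rewrite -Eu -Ev in ne sz *.
    by rewrite /f (edge_parity Ef) ?negbK // => E; apply: ne.
have G k : k < size c -> f (nth [::] c k) = f (nth [::] c 0) (+) odd k.
  elim: k => [|k IH] kc; first by rewrite addbF.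
  have kc' : k < size c by apply: ltnW.
  have E := step k kc'; rewrite modn_small // in E.
  by rewrite -[LHS]negbK -E IH // /= addbN.
have n1 : (size c).-1 < size c by rewrite prednK.
have := step _ n1; rewrite prednK // modnn G //.
have -> : size c = ((size c).-1).+1 by rewrite prednK.
rewrite -pred_Sn /=.
by case: (f _); case: (odd _).
Qed.
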